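(* Let $Y\subset\mathbb{R}^2$ be a finite point set in general position. Let $w_1$ and $w_2$ be two points of $\mathrm{Vor}_Q(Y)$, each a Voronoi edge bend or a Voronoi vertex, that are adjacent along a Voronoi edge of $\mathrm{Vor}_Q(Y)$ (i.e., consecutive bends/vertices on that edge). Then for every point $x$ on the segment $w_1w_2$, we have $Q^*_x\subseteq Q^*_{w_1}\cup Q^*_{w_2}$. The same conclusion holds if $w_1$ and $w_2$ are the two Voronoi vertices that are the endpoints of a Voronoi edge $e$ of $\mathrm{Vor}_Q(Y)$ and $x$ is any point on $e$.
   Context: Let $Q\subset\mathbb{R}^2$ be a convex polygon with a constant number of vertices containing the origin in its interior. For $x,y\in\mathbb{R}^2$, $d_Q(x,y)=\min\{\lambda\ge 0: y\in\lambda Q+x\}$. Let $Q^*=\{-x:x\in Q\}$, so $d_{Q^*}(x,y)=d_Q(y,x)$. For a finite set $Y$ and $p\in Y$, the Voronoi cell is $V_p(Y)=\{x\in\mathbb{R}^2: d_Q(p,x)\le d_Q(q,x)\ \forall q\in Y\}$, and $\mathrm{Vor}_Q(Y)$ is the subdivision of the plane into these cells. Each Voronoi edge (common boundary of two cells) is a polygonal curve; its interior vertices are called Voronoi edge bends. For $x\in\mathbb{R}^2$, $Q^*_x$ denotes the largest homothetic copy $\lambda Q^*+x$ ($\lambda\ge 0$) of $Q^*$ centered at $x$ such that $\mathrm{int}(Q^*_x)\cap Y=\emptyset$. General position means: no two sides of $Q$ are parallel; no line through two points of $Y$ is parallel to a side of $Q$; no four points of $Y$ lie on the boundary of a homothetic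 copy of $Q^*$. *)

(* Defs.v *)
From mathcomp Require Import all_boot all_order all_algebra.
From mathcomp Require Import classical_sets reals.

Set Implicit Arguments.
Unset Strict Implicit.
Unset Printing Implicit Defensive.

Import Order.TTheory GRing.Theory Num.Theory.
Local Open Scope ring_scope.
Local Open Scope classical_set_scope.

Definition pt (R : realType) := (R * R)%type.

Definition porig (R : realType) : pt R := (0, 0).
Definition padd (R : realType) (a b : pt R) : pt R := (a.1 + b.1, a.2 + b.2).
Definition psub (R : realType) (a b : pt R) : pt R := (a.1 - b.1, a.2 - b.2).
Definition pscale (R : realType) (l : R) (a : pt R) : pt R := (l * a.1, l * a.2).
Definition cross (R : realType) (a b : pt R) : R := a.1 * b.2 - a.2 * b.1.
Definition sqnorm (R : realType) (a : pt R) : R := a.1 ^+ 2 + a.2 ^+ 2.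
(* orientation of (a,b,c): > 0 iff c is strictly to the left of line ab *)
Definition orient (R : realType) (a b c : pt R) : R := cross (psub b a) (psub c a).

Definition seg_pt (R : realType) (a b : pt R) (t : R) : pt R :=
  padd a (pscale t (psub b a)).
Definition on_seg (R : realType) (a b x : pt R) : Prop :=
  exists t : R, 0 <= t <= 1 /\ x = seg_pt a b t.
Definition on_open_seg (R : realType) (a b x : pt R) : Prop :=
  exists t : R, 0 < t < 1 /\ x = seg_pt a b t.

Definition vtx (R : realType) (vs : seq (pt R)) (i : nat) : pt R :=
  nth (porig R) vs (i %% size vs).
Definition side_dir (R : realType) (vs : seq (pt R)) (i : nat) : pt R :=
  psub (vtx vs i.+1) (vtx vs i).

(* vs lists the vertices of a (strictly) convex polygon counterclockwise, and
   the origin lies in the interior of the polygon. *)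
Definition convex_polygon_0 (R : realType) (vs : seq (pt R)) : Prop :=
  [/\ (3 <= size vs)%N,
      (forall i j, (i < size vs)%N -> (j < size vs)%N -> j != i ->
          j != (i.+1 %% size vs)%N ->
          0 < orient (vtx vs i) (vtx vs i.+1) (vtx vs j))
    & (forall i, (i < size vs)%N -> 0 < orient (vtx vs i) (vtx vs i.+1) (porig R))].

Definition inQ (R : realType) (vs : seq (pt R)) (z : pt R) : Prop :=
  forall i, (i < size vs)%N -> 0 <= orient (vtx vs i) (vtx vs i.+1) z.
Definition intQ (R : realType) (vs : seq (pt R)) (z : pt R) : Prop :=
  forall i, (i < size vs)%N -> 0 < orient (vtx vs i) (vtx vs i.+1) z.
Definition on_side (R : realType) (vs : seq (pt R)) (i : nat) (z : pt R) : Prop :=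
  on_seg (vtx vs i) (vtx vs i.+1) z.

Definition dQ (R : realType) (vs : seq (pt R)) (x y : pt R) : R :=
  inf [set l : R | 0 <= l /\ exists q, inQ vs q /\ y = padd x (pscale l q)].

(* The homothetic copy l Q^* + c of Q^* = -Q, its interior and its boundary *)
Definition hom_Qstar (R : realType) (vs : seq (pt R)) (l : R) (c : pt R) : set (pt R) :=
  [set z | exists q, inQ vs q /\ z = psub c (pscale l q)].
Definition int_hom_Qstar (R : realType) (vs : seq (pt R)) (l : R) (c : pt R) : set (pt R) :=
  [set z | 0 < l /\ exists q, intQ vs q /\ z = psub c (pscale l q)].
Definition bd_hom_Qstar (R : realType) (vs : seq (pt R)) (l : R) (c : pt R) : set (pt R) :=
  [set z | exists i q, (i < size vs)%N /\ on_side vs i q /\ z = psub c (pscale l q)].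

Definition empty_radius (R : realType) (vs : seq (pt R)) (Y : seq (pt R)) (x : pt R) : R :=
  sup [set l : R | 0 <= l /\ forall y, y \in Y -> ~ int_hom_Qstar vs l x y].
Definition Qstar_at (R : realType) (vs : seq (pt R)) (Y : seq (pt R)) (x : pt R) : set (pt R) :=
  hom_Qstar vs (empty_radius vs Y x) x.

Definition vcell (R : realType) (vs : seq (pt R)) (Y : seq (pt R)) (p : pt R) : set (pt R) :=
  [set x | forall q, q \in Y -> dQ vs p x <= dQ vs q x].

Definition general_position (R : realType) (vs : seq (pt R)) (Y : seq (pt R)) : Prop :=
  [/\ (forall i j, (i < size vs)%N -> (j < size vs)%N -> i != j ->
          cross (side_dir vs i) (side_dir vs j) != 0),
      (forall p q i, p \in Y -> q \in Y -> p != q -> (i < size vs)%N ->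
          cross (psub q p) (side_dir vs i) != 0)
    & (forall (l : R) (c p1 p2 p3 p4 : pt R), 0 < l ->
          p1 \in Y -> p2 \in Y -> p3 \in Y -> p4 \in Y -> uniq [:: p1; p2; p3; p4] ->
          ~ [/\ bd_hom_Qstar vs l c p1, bd_hom_Qstar vs l c p2,
                bd_hom_Qstar vs l c p3 & bd_hom_Qstar vs l c p4])].

Definition vor_vertex (R : realType) (vs : seq (pt R)) (Y : seq (pt R)) (w : pt R) : Prop :=
  exists p q r, [/\ p \in Y, q \in Y, r \in Y, uniq [:: p; q; r] &
     [/\ vcell vs Y p w, vcell vs Y q w & vcell vs Y r w]].

Definition straight_at (R : realType) (E : set (pt R)) (w : pt R) : Prop :=
  exists (e : R) (d : pt R), [/\ 0 < e, d != porig R &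
     forall z, sqnorm (psub z w) < e ->
        (E z <-> exists t : R, z = padd w (pscale t d))].

Definition vor_bend (R : realType) (vs : seq (pt R)) (Y : seq (pt R)) (w : pt R) : Prop :=
  exists p q, [/\ p \in Y, q \in Y, p != q &
     [/\ vcell vs Y p w, vcell vs Y q w,
     (forall r, r \in Y -> vcell vs Y r w -> r = p \/ r = q) &
     ~ straight_at (vcell vs Y p `&` vcell vs Y q) w]].

Definition consecutive_on_edge (R : realType) (vs : seq (pt R)) (Y : seq (pt R))
    (w1 w2 : pt R) : Prop :=
  [/\ w1 != w2,
      vor_bend vs Y w1 \/ vor_vertex vs Y w1,
      vor_bend vs Y w2 \/ vor_vertex vs Y w2 &
      exists p q, [/\ p \in Y, q \in Y, p != q,
        (forall x, on_seg w1 w2 x -> vcell vs Y p x /\ vcell vs Y q x) &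
        (forall x, on_open_seg w1 w2 x -> ~ vor_bend vs Y x /\ ~ vor_vertex vs Y x)]].

(* x lies on the Voronoi edge (between V_p and V_q) whose endpoints are the
   Voronoi vertices w1 and w2: the edge is traced by a polygonal path
   w1 = u_0, u_1, ..., u_k = w2 contained in V_p /\ V_q, meeting no Voronoi
   vertex except at its two ends, and touching w1 (resp. w2) only at its start
   (resp. end). *)
Definition on_edge_between (R : realType) (vs : seq (pt R)) (Y : seq (pt R))
    (w1 w2 x : pt R) : Prop :=
  exists p q (us : seq (pt R)),
    let ws := w1 :: rcons us w2 in
    let k := size us in
    [/\ p \in Y, q \in Y, p != q &
     [/\ (forall i, (i <= k)%N -> nth w1 ws i != nth w1 ws i.+1),
      (forall i (t : R), (i <= k)%N -> 0 <= t <= 1 ->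
          let z := seg_pt (nth w1 ws i) (nth w1 ws i.+1) t in
          [/\ vcell vs Y p z, vcell vs Y q z,
              (z = w1 -> i = 0%N /\ t = 0),
              (z = w2 -> i = k /\ t = 1) &
              (z != w1 -> z != w2 -> ~ vor_vertex vs Y z)]) &
      exists i, (i <= k)%N /\ on_seg (nth w1 ws i) (nth w1 ws i.+1) x]].

(* Main.v *)
Require Import Defs.
From mathcomp Require Import all_boot all_order all_algebra.
From mathcomp Require Import classical_sets reals.
From mathcomp Require Import boolp ring lra.
Import Order.TTheory GRing.Theory Num.Theory.
Local Open Scope ring_scope.
Local Open Scope classical_set_scope.

(* Strategy: the gauge of Q is the
   maximum of finitely many linear forms; Q*_x is a sublevel set of it; the
   homothets through two sites p,q are monotone along the bisector. *)

Section S.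
Variable R : realType.
Fixpoint bmax (n : nat) (f : nat -> R) : R :=
  if n is n'.+1 then Num.max (bmax n' f) (f n') else 0.
Lemma bmax_ge0 n f : 0 <= bmax n f.
Proof. by elim: n => [|n IH] //=; rewrite le_max IH. Qed.
Lemma bmax_ge n f i : (i < n)%N -> f i <= bmax n f.
Proof.
elim: n => [//|n IH]; rewrite ltnS leq_eqVlt => /orP[/eqP->|hi] /=.
  by rewrite le_max lexx orbT.
by rewrite le_max IH.
Qed.
Lemma bmax_le n f m : 0 <= m -> (forall i, (i < n)%N -> f i <= m) -> bmax n f <= m.
Proof.
move=> h0; elim: n => [|n IH] H //=.
rewrite ge_max IH ?H //= => i hi; apply: H; exact: ltnW.
Qed.
Lemma bmax_attain n f : bmax n f = 0 \/ exists i, (i < n)%N /\ f i = bmax n f.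
Proof.
elim: n => [|n IH] /=; first by left.
case: (leP (bmax n f) (f n)) => h.
  by right; exists n; split.
case: IH => [->|[i [hi <-]]]; first by left.
by right; exists i; split => //; apply: ltnW.
Qed.
Lemma bmax_lt n f m : 0 < m -> (forall i, (i < n)%N -> f i < m) -> bmax n f < m.
Proof.
move=> h0 H; case: (bmax_attain n f) => [->//|[i [hi <-]]]; exact: H.
Qed.

Lemma bmax_scale n f l : 0 <= l -> bmax n (fun i => l * f i) = l * bmax n f.
Proof.
move=> hl; apply/le_anti/andP; split.
  apply: bmax_le; first by apply: mulr_ge0 => //; apply: bmax_ge0.
  by move=> i hi; apply: ler_wpM2l => //; apply: bmax_ge.
case: (bmax_attain n f) => [->|[i [hi <-]]]; first by rewrite mulr0 bmax_ge0.
exact: (bmax_ge _ (fun j => l * f j) _ hi).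
Qed.

Variable vs : seq (pt R).
Hypothesis Hcv : convex_polygon_0 vs.

Definition hh i := orient (vtx vs i) (vtx vs i.+1) (porig R).
Definition lin i (v : pt R) := - cross (side_dir vs i) v / hh i.
Definition G (v : pt R) := bmax (size vs) (fun i => lin i v).

Lemma hh_gt0 {i} : (i < size vs)%N -> 0 < hh i.
Proof. by case: Hcv => _ _ H /H. Qed.

Lemma linD i u v : lin i (padd u v) = lin i u + lin i v.
Proof. rewrite /lin /cross /padd /= -mulrDl; congr (_ * _); ring. Qed.
Lemma linN i u v : lin i (psub u v) = lin i u - lin i v.
Proof. rewrite /lin /cross /psub /= -mulrBl; congr (_ * _); ring. Qed.
Lemma linZ i l u : lin i (pscale l u) = l * lin i u.
Proof. rewrite /lin /cross /pscale /= [RHS]mulrA; congr (_ * _); ring. Qed.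

Lemma orient_lin i z : (i < size vs)%N ->
  (0 <= orient (vtx vs i) (vtx vs i.+1) z) = (lin i z <= 1).
Proof.
move=> hi; have h := hh_gt0 hi; rewrite /lin ler_pdivrMr // mul1r.
move: h; rewrite /hh /orient /cross /side_dir /psub /porig /=.
set a := vtx vs i; set b := vtx vs i.+1 => _.
apply/idP/idP => H; lra.
Qed.
Lemma orient_lin_lt i z : (i < size vs)%N ->
  (0 < orient (vtx vs i) (vtx vs i.+1) z) = (lin i z < 1).
Proof.
move=> hi; have h := hh_gt0 hi; rewrite /lin ltr_pdivrMr // mul1r.
move: h; rewrite /hh /orient /cross /side_dir /psub /porig /=.
set a := vtx vs i; set b := vtx vs i.+1 => _.
apply/idP/idP => H; lra.
Qed.

Lemma G_ge0 v : 0 <= G v. Proof. exact: bmax_ge0. Qed.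
Lemma lin_le_G {i} v : (i < size vs)%N -> lin i v <= G v.
Proof. by move=> hi; apply: (bmax_ge _ (fun i => lin i v) _ hi). Qed.
Lemma G_le v m : 0 <= m -> (forall i, (i < size vs)%N -> lin i v <= m) -> G v <= m.
Proof. exact: bmax_le. Qed.
Lemma G_lt v m : 0 < m -> (forall i, (i < size vs)%N -> lin i v < m) -> G v < m.
Proof. exact: bmax_lt. Qed.
Lemma G_attain v : G v = 0 \/ exists i, (i < size vs)%N /\ lin i v = G v.
Proof. exact: bmax_attain. Qed.

Lemma GZ l v : 0 <= l -> G (pscale l v) = l * G v.
Proof.
move=> hl; rewrite /G -bmax_scale //; congr bmax; apply: boolp.funext => i; exact: linZ.
Qed.
Lemma GD u v : G (padd u v) <= G u + G v.
Proof.
apply: G_le; first by rewrite addr_ge0 ?G_ge0.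
by move=> i hi; rewrite linD lerD ?lin_le_G.
Qed.

Lemma G0 : G (porig R) = 0.
Proof.
have -> : porig R = pscale 0 (porig R) by rewrite /pscale /porig /= mul0r.
by rewrite GZ ?lexx // mul0r.
Qed.

Lemma cross0_vec {a b v : pt R} : cross a v = 0 -> cross b v = 0 ->
  cross a b != 0 -> v = porig R.
Proof.
case: a => a1 a2; case: b => b1 b2; case: v => x y; rewrite /cross /porig /= => e0 e1 hd.
have hx : x * (a1 * b2 - a2 * b1) = b1 * (a1 * y - a2 * x) - a1 * (b1 * y - b2 * x) by ring.
have hy : y * (a1 * b2 - a2 * b1) = b2 * (a1 * y - a2 * x) - a2 * (b1 * y - b2 * x) by ring.
rewrite e0 e1 !mulr0 subr0 in hx hy.
move/eqP: hx; move/eqP: hy; rewrite !mulf_eq0 (negbTE hd) !orbF => /eqP-> /eqP-> //.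
Qed.

Lemma G_posdef {v} : G v = 0 -> v = porig R.
Proof.
move=> Gv.
have Hc : forall i, (i < size vs)%N -> 0 <= cross (side_dir vs i) v.
  move=> i hi; have := lin_le_G v hi; rewrite Gv /lin => H.
  have h := hh_gt0 hi; rewrite -oppr_le0. 
  by move: H; rewrite ler_pdivrMr // mul0r.
case: Hcv => n3 Hconv _.
set n := size vs in n3 Hc Hconv.
have Hsum : \sum_(0 <= k < n) cross (side_dir vs k) v = 0.
  rewrite (telescope_sumr_eq (fun k => (vtx vs k).1 * v.2 - (vtx vs k).2 * v.1)) //.
    rewrite /vtx modnn mod0n; ring.
  by move=> k _; rewrite /cross /side_dir /psub /=; ring.
have n0 : (0 < n)%N by apply: leq_ltn_trans n3.
have n1 : (1 < n)%N by apply: leq_ltn_trans n3.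
move: Hsum; rewrite big_ltn // big_ltn //.
have : 0 <= \sum_(2 <= k < n) cross (side_dir vs k) v.
  rewrite big_nat_cond; apply: sumr_ge0 => i /andP[/andP[_ hi] _]; exact: Hc.
move: (Hc 0%N n0) (Hc 1%N n1) => c0 c1 cr hs.
have e0 : cross (side_dir vs 0) v = 0 by lra.
have e1 : cross (side_dir vs 1) v = 0 by lra.
have hd : 0 < cross (side_dir vs 0) (side_dir vs 1).
  have := Hconv 0%N 2%N n0 n3 isT.
  rewrite (modn_small n1) => /(_ isT).
  by rewrite /orient /cross /side_dir /psub /=; lra.
apply: (cross0_vec e0 e1); exact: lt0r_neq0.
Qed.

Lemma pt_eq (a b : pt R) : a.1 = b.1 -> a.2 = b.2 -> a = b.
Proof. by case: a => ? ?; case: b => ? ? /= -> ->. Qed.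

Lemma inQ_G {q} : inQ vs q -> G q <= 1.
Proof.
move=> hq; apply: G_le => // i hi; rewrite -orient_lin //; exact: hq.
Qed.
Lemma intQ_G {q} : intQ vs q -> G q < 1.
Proof.
move=> hq; apply: G_lt => // i hi; rewrite -orient_lin_lt //; exact: hq.
Qed.
Lemma G_inQ {q} : G q <= 1 -> inQ vs q.
Proof.
move=> hq i hi; rewrite orient_lin //; apply: le_trans hq; exact: lin_le_G.
Qed.
Lemma G_intQ {q} : G q < 1 -> intQ vs q.
Proof.
move=> hq i hi; rewrite orient_lin_lt //; apply: le_lt_trans hq; exact: lin_le_G.
Qed.
Lemma inQ0 : inQ vs (porig R).
Proof. by move=> i hi; apply: ltW; apply: hh_gt0. Qed.

Lemma psub_eq0 {a b} : psub a b = porig R -> a = b.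
Proof.
case: a => a1 a2; case: b => b1 b2; rewrite /psub /porig /= => -[h1 h2].
by apply: pt_eq => /=; apply/eqP; rewrite -subr_eq0; apply/eqP.
Qed.

Lemma G_normalize v : 0 < G v -> G (pscale (G v)^-1 v) = 1.
Proof. by move=> h; rewrite GZ ?invr_ge0 ?ltW // mulVf // gt_eqF. Qed.

Lemma hom_G l c z : 0 <= l -> hom_Qstar vs l c z <-> G (psub c z) <= l.
Proof.
move=> hl; split.
  case=> q [hq ->].
  have -> : psub c (psub c (pscale l q)) = pscale l q.
    by apply: pt_eq; rewrite /psub /pscale /=; ring.
  rewrite GZ //; have := inQ_G hq; nra.
move=> hG; case: (eqVneq l 0) => [l0|ln0].
  have : G (psub c z) = 0 by apply/le_anti; rewrite G_ge0 -l0 hG.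
  move/G_posdef/psub_eq0 => <-; exists (porig R); split; first exact: inQ0.
  by apply: pt_eq; rewrite /psub /pscale /porig /= l0; ring.
have lp : 0 < l by rewrite lt_def ln0.
exists (pscale l^-1 (psub c z)); split.
  apply: G_inQ; rewrite GZ ?invr_ge0 //.
  by rewrite ler_pdivrMl // mulr1.
by apply: pt_eq; rewrite /psub /pscale /=; field; rewrite gt_eqF.
Qed.

Lemma dQ_G x y : dQ vs x y = G (psub y x).
Proof.
rewrite /dQ; set S := [set l | _].
have mem : S (G (psub y x)).
  split; first exact: G_ge0.
  exists (pscale (G (psub y x))^-1 (psub y x)); split.
    case: (eqVneq (G (psub y x)) 0) => [->|h].
      by rewrite invr0 /pscale !mul0r; exact: inQ0.
    by apply: G_inQ; rewrite G_normalize // lt_def h G_ge0.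
  case: (eqVneq (G (psub y x)) 0) => [h0|h].
    by move: (psub_eq0 (G_posdef h0)) => ->; apply: pt_eq; rewrite /padd /pscale /psub /=; ring.
  by apply: pt_eq; rewrite /padd /pscale /psub /=; field.
have lb : lbound S (G (psub y x)).
  move=> l [hl [q [hq ->]]].
  have -> : psub (padd x (pscale l q)) x = pscale l q.
    by apply: pt_eq; rewrite /padd /pscale /psub /=; ring.
  rewrite GZ //; have := inQ_G hq; nra.
apply/le_anti/andP; split.
  by apply: ge_inf => //; exists (G (psub y x)).
by apply: lb_le_inf => //; exists (G (psub y x)).
Qed.

Lemma vcellE Y p x : vcell vs Y p x <-> forall q, q \in Y -> G (psub x p) <= G (psub x q).
Proof. by rewrite /vcell; split => H q hq; move: (H q hq); rewrite !dQ_G. Qed.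

Lemma ER Y x p : p \in Y -> (forall y, y \in Y -> G (psub x p) <= G (psub x y)) ->
  empty_radius vs Y x = G (psub x p).
Proof.
move=> pY Hmin; rewrite /empty_radius; set S := [set l | _].
have mem : S (G (psub x p)).
  split; first exact: G_ge0.
  move=> y yY [rp [q [hq hy]]].
  have := Hmin y yY.
  have -> : psub x y = pscale (G (psub x p)) q.
    by rewrite hy; apply: pt_eq; rewrite /psub /pscale /=; ring.
  rewrite GZ ?G_ge0 //; have := intQ_G hq; nra.
have ub : ubound S (G (psub x p)).
  move=> l [hl Hl]; rewrite leNgt; apply/negP => hlt.
  have lp : 0 < l by apply: le_lt_trans hlt; exact: G_ge0.
  apply: (Hl p pY); split => //.
  exists (pscale l^-1 (psub x p)); split.
    apply: G_intQ; rewrite GZ ?invr_ge0 ?ltW //.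
    by rewrite ltr_pdivrMl // mulr1.
  by apply: pt_eq; rewrite /psub /pscale /=; field; rewrite gt_eqF.
apply/le_anti/andP; split.
  by apply: ge_sup => //; exists (G (psub x p)).
apply: sup_upper_bound => //; split; first by exists (G (psub x p)).
by exists (G (psub x p)).
Qed.


Lemma GC a b u v : 0 <= a -> 0 <= b ->
  G (padd (pscale a u) (pscale b v)) <= a * G u + b * G v.
Proof. move=> ha hb; apply: le_trans (GD _ _) _; rewrite !GZ //. Qed.

Lemma AFF a b l : 0 < l < 1 ->
  G (padd (pscale l a) (pscale (1 - l) b)) = l * G a + (1 - l) * G b ->
  (G a = 0 /\ G b = 0) \/
  exists i, [/\ (i < size vs)%N, lin i a = G a & lin i b = G b].
Proof.
move=> /andP[l0 l1] hE.
have Ga := G_ge0 a; have Gb := G_ge0 b.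
case: (G_attain (padd (pscale l a) (pscale (1 - l) b))) => [h0|[i [hi hi']]].
  left; rewrite h0 in hE; split; nra.
right; exists i; split => //.
  move: hi'; rewrite hE linD !linZ => e.
  have := lin_le_G a hi; have := lin_le_G b hi; nra.
move: hi'; rewrite hE linD !linZ => e.
have := lin_le_G a hi; have := lin_le_G b hi; nra.
Qed.

Lemma COL1 a b t : 0 <= t <= 1 ->
  G (psub b a) = G (psub b (seg_pt a b t)) + G (psub (seg_pt a b t) a).
Proof.
move=> /andP[t0 t1].
have -> : psub b (seg_pt a b t) = pscale (1 - t) (psub b a).
  by apply: pt_eq; rewrite /seg_pt /padd /psub /pscale /=; ring.
have -> : psub (seg_pt a b t) a = pscale t (psub b a).
  by apply: pt_eq; rewrite /seg_pt /padd /psub /pscale /=; ring.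
rewrite !GZ ?subr_ge0 //; ring.
Qed.
Lemma COL2 a b t : 0 <= t <= 1 ->
  G (psub a b) = G (psub a (seg_pt a b t)) + G (psub (seg_pt a b t) b).
Proof.
move=> /andP[t0 t1].
have -> : psub a (seg_pt a b t) = pscale t (psub a b).
  by apply: pt_eq; rewrite /seg_pt /padd /psub /pscale /=; ring.
have -> : psub (seg_pt a b t) b = pscale (1 - t) (psub a b).
  by apply: pt_eq; rewrite /seg_pt /padd /psub /pscale /=; ring.
rewrite !GZ ?subr_ge0 //; ring.
Qed.

Lemma Gtri a b c : G (psub a c) <= G (psub a b) + G (psub b c).
Proof.
have -> : psub a c = padd (psub a b) (psub b c).
  by apply: pt_eq; rewrite /padd /psub /=; ring.
exact: GD.
Qed.

Lemma CROSS z c c' w t s : 0 <= t <= 1 -> 0 <= s <= 1 ->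
  seg_pt z c t = seg_pt w c' s ->
  G (psub c' z) + G (psub c w) <= G (psub c z) + G (psub c' w).
Proof.
move=> ht hs hy.
have h1 := COL1 z c t ht; have h2 := COL1 w c' s hs.
rewrite -hy in h2.
have h3 := Gtri c' (seg_pt z c t) z.
have h4 := Gtri c (seg_pt z c t) w.
lra.
Qed.

Lemma orient_seg (X Y a b : pt R) t :
  orient X Y (seg_pt a b t) = (1 - t) * orient X Y a + t * orient X Y b.
Proof. rewrite /orient /cross /seg_pt /padd /pscale /psub /=; ring. Qed.

Lemma orient_cyc (X Y Z : pt R) : orient Y Z X = orient X Y Z.
Proof. rewrite /orient /cross /psub /=; ring. Qed.
Lemma orient_swap (X Y Z : pt R) : orient Y X Z = - orient X Y Z.
Proof. rewrite /orient /cross /psub /=; ring. Qed.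
Lemma orient_sum (X Y Z v : pt R) :
  orient Y Z v + orient Z X v + orient X Y v = orient X Y Z.
Proof. rewrite /orient /cross /psub /=; ring. Qed.

Lemma bary1 (X Y Z v : pt R) : orient X Y Z * v.1 =
  orient X Y Z * X.1 + orient X Y v * (Z.1 - X.1) + orient Z X v * (Y.1 - X.1).
Proof. rewrite /orient /cross /psub /=; ring. Qed.
Lemma bary2 (X Y Z v : pt R) : orient X Y Z * v.2 =
  orient X Y Z * X.2 + orient X Y v * (Z.2 - X.2) + orient Z X v * (Y.2 - X.2).
Proof. rewrite /orient /cross /psub /=; ring. Qed.

Lemma edgeZX (X Y Z v : pt R) : orient X Y Z != 0 -> orient Z X v = 0 ->
  v = seg_pt X Z (orient X Y v / orient X Y Z).
Proof.
move=> h0 h; apply: pt_eq; rewrite /seg_pt /padd /pscale /psub /=; apply: (mulfI h0).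
  by rewrite bary1 h mul0r addr0; field.
by rewrite bary2 h mul0r addr0; field.
Qed.
Lemma edgeYZ (X Y Z v : pt R) : orient X Y Z != 0 -> orient Y Z v = 0 ->
  v = seg_pt Y Z (orient X Y v / orient X Y Z).
Proof.
move=> h0 h; have hs := orient_sum X Y Z v; rewrite h add0r in hs.
apply: pt_eq; rewrite /seg_pt /padd /pscale /psub /=; apply: (mulfI h0).
  rewrite bary1 -hs; field; by rewrite -hs in h0.
rewrite bary2 -hs; field; by rewrite -hs in h0.
Qed.

Lemma seg1 (a b : pt R) : seg_pt a b 1 = b.
Proof. by apply: pt_eq; rewrite /seg_pt /padd /pscale /psub /=; ring. Qed.
Lemma seg0 (a b : pt R) : seg_pt a b 0 = a.
Proof. by apply: pt_eq; rewrite /seg_pt /padd /pscale /psub /=; ring. Qed.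
Lemma segC1 (z c : pt R) t1 t : seg_pt z (seg_pt z c t1) t = seg_pt z c (t * t1).
Proof. by apply: pt_eq; rewrite /seg_pt /padd /pscale /psub /=; ring. Qed.
Lemma segC2 (z c : pt R) t1 t :
  seg_pt c (seg_pt z c t1) t = seg_pt z c (1 - t * (1 - t1)).
Proof. by apply: pt_eq; rewrite /seg_pt /padd /pscale /psub /=; ring. Qed.

Lemma ROOT (a b : R) : a < 0 <= b ->
  exists t, [/\ 0 < t <= 1, (1 - t) * a + t * b = 0,
     (forall t', t <= t' -> 0 <= (1 - t') * a + t' * b) &
     (forall t', t' <= t -> (1 - t') * a + t' * b <= 0)].
Proof.
move=> /andP[ha hb]; have hba : 0 < b - a by lra.
have E : forall t', (1 - t') * a + t' * b = (t' - a / (a - b)) * (b - a).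
  by move=> t'; field; lra.
exists (a / (a - b)); split.
- apply/andP; split; first by rewrite ltr_ndivlMr ?mul0r; lra.
  by rewrite ler_ndivrMr ?mul1r; lra.
- by rewrite E subrr mul0r.
- by move=> t' h; rewrite E; apply: mulr_ge0; lra.
- by move=> t' h; rewrite E; apply: mulr_le0_ge0; lra.
Qed.

Lemma PL (aa ba ab bb : R) : 0 <= ab -> 0 <= bb -> (aa < 0 \/ ba < 0) ->
  exists t, (0 <= t <= 1) /\
   (((1 - t) * ba + t * bb = 0 /\ 0 <= (1 - t) * aa + t * ab) \/
    ((1 - t) * aa + t * ab = 0 /\ 0 <= (1 - t) * ba + t * bb)).
Proof.
move=> hab hbb H.
case: (ltP ba 0) => hba.
  have hb' : ba < 0 <= bb by rewrite hba hbb.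
  have [tb [/andP[tb0 tb1] eb Hb1 Hb2]] := ROOT _ _ hb'.
  case: (leP 0 ((1 - tb) * aa + tb * ab)) => ha.
    by exists tb; split; [apply/andP; split; lra | left].
  have haa : aa < 0.
    rewrite ltNge; apply/negP => h; move: ha; rewrite ltNge => /negP; apply.
    by apply: addr_ge0; apply: mulr_ge0 => //; lra.
  have ha' : aa < 0 <= ab by rewrite haa hab.
  have [ta [/andP[ta0 ta1] ea Ha1 Ha2]] := ROOT _ _ ha'.
  have tab : tb <= ta.
    rewrite leNgt; apply/negP => h; have := Ha1 tb (ltW h); lra.
  by exists ta; split; [apply/andP; split; lra | right; split => //; apply: Hb1].
have haa : aa < 0 by case: H => // h; lra.
have ha' : aa < 0 <= ab by rewrite haa hab.
have [ta [/andP[ta0 ta1] ea Ha1 Ha2]] := ROOT _ _ ha'.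
exists ta; split; first by apply/andP; split; lra.
right; split => //; apply: addr_ge0; apply: mulr_ge0 => //; lra.
Qed.

Lemma COLIN (p q y : pt R) : p != q -> orient p q y = 0 -> exists t, y = seg_pt p q t.
Proof.
move=> hpq; rewrite /orient /cross /seg_pt /padd /pscale /psub /=.
case: p hpq => p1 p2; case: q => q1 q2; case: y => y1 y2 /= hpq h.
case: (eqVneq (q1 - p1) 0) => h1.
  have h2 : q2 - p2 != 0.
    apply/negP => /eqP h2; move/negP: hpq; apply; apply/eqP.
    by apply: pt_eq => /=; lra.
  have hy1 : y1 = p1.
    have : (q2 - p2) * (y1 - p1) = 0 by move: h; rewrite h1 mul0r; lra.
    by move/eqP; rewrite mulf_eq0 (negbTE h2) /= subr_eq0 => /eqP.
  exists ((y2 - p2) / (q2 - p2)); apply: pt_eq => /=.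
    by rewrite h1 mulr0 addr0.
  by field.
exists ((y1 - p1) / (q1 - p1)); apply: pt_eq => /=.
  by field.
have key : (q1 - p1) * y2 = (q1 - p1) * p2 + (q2 - p2) * (y1 - p1) by lra.
apply: (mulfI h1); rewrite key; by field.
Qed.

Lemma EQC a b m l : 0 < l < 1 -> m = padd (pscale l a) (pscale (1 - l) b) ->
  G m = G a -> G b <= G a ->
  G a = 0 \/ exists i, (i < size vs)%N /\ lin i a = lin i b.
Proof.
move=> hl hm hma hba; have /andP[l0 l1] := hl.
have l1' : 0 <= 1 - l by lra.
have hc := GC l (1 - l) a b (ltW l0) l1'; rewrite -hm hma in hc.
have hGb : G b = G a.
  apply/le_anti; rewrite hba /=.
  have : (1 - l) * (G a - G b) <= 0 by lra.
  by rewrite pmulr_rle0 ?subr_le0 //; lra.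
have hE : G (padd (pscale l a) (pscale (1 - l) b)) = l * G a + (1 - l) * G b.
  by rewrite -hm hma hGb; ring.
case: (AFF _ _ _ hl hE) => [[h _]|[i [hi h1 h2]]]; first by left.
by right; exists i; split => //; rewrite h1 h2 hGb.
Qed.

Section PQ.
Variables p q : pt R.
Hypothesis Hpq : p != q.
Hypothesis gp : forall i, (i < size vs)%N -> lin i (psub q p) != 0.

Lemma lin_e_scale i k : (i < size vs)%N -> k != 0 -> lin i (pscale k (psub q p)) != 0.
Proof. by move=> hi hk; rewrite linZ mulf_neq0 // gp. Qed.

Lemma G_pq_pos c : G (psub c p) = G (psub c q) -> 0 < G (psub c p).
Proof.
move=> h; rewrite lt_def G_ge0 andbT; apply/negP => /eqP h0.
move/negP: Hpq; apply; apply/eqP.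
have e1 := psub_eq0 (G_posdef h0); rewrite h0 in h.
have e2 := psub_eq0 (G_posdef (esym h)); by rewrite -e1 -e2.
Qed.

Lemma G_pq_pos' c : G (psub c p) = G (psub c q) -> G (psub c p) != 0.
Proof. by move/G_pq_pos; rewrite lt_def => /andP[]. Qed.

Lemma LINE c y : G (psub c p) = G (psub c q) -> orient p q y = 0 ->
  G (psub c y) <= G (psub c p) -> exists t, (0 <= t <= 1) /\ y = seg_pt p q t.
Proof.
move=> hb hy hcy; have [t ey] := COLIN _ _ _ Hpq hy.
have rpos := G_pq_pos' _ hb.
case: (leP 0 t) => t0; case: (leP t 1) => t1.
- by exists t; rewrite t0 t1.
-
  have ht0 : t != 0 by rewrite gt_eqF //; lra.
  have hl : 0 < 1 - t^-1 < 1.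
    apply/andP; split.
      by rewrite subr_gt0 invf_lt1 //; lra.
    by rewrite ltrBlDr ltrDl invr_gt0; lra.
  have E : psub c q = padd (pscale (1 - t^-1) (psub c p))
                  (pscale (1 - (1 - t^-1)) (psub c y)).
    by rewrite ey; apply: pt_eq; rewrite /seg_pt /padd /pscale /psub /=; field.
  case: (EQC _ _ _ _ hl E (esym hb) hcy) => [/eqP|[i [hi hli]]]; first by rewrite (negbTE rpos).
  have : lin i (pscale t (psub q p)) != 0 by apply: lin_e_scale.
  have -> : pscale t (psub q p) = psub (psub c p) (psub c y).
    by rewrite ey; apply: pt_eq; rewrite /seg_pt /padd /pscale /psub /=; ring.
  by rewrite linN hli subrr eqxx.
-
  have hl : 0 < - t / (1 - t) < 1.
    apply/andP; split.
      by rewrite divr_gt0 //; lra.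
    by rewrite ltr_pdivrMr ?mul1r; lra.
  have ht1 : 1 - t != 0 by rewrite gt_eqF //; lra.
  have E : psub c p = padd (pscale (- t / (1 - t)) (psub c q))
                  (pscale (1 - (- t / (1 - t))) (psub c y)).
    by rewrite ey; apply: pt_eq; rewrite /seg_pt /padd /pscale /psub /=; field.
  have hcy' : G (psub c y) <= G (psub c q) by rewrite -hb.
  case: (EQC _ _ _ _ hl E hb hcy') => [h|[i [hi hli]]].
    by move/eqP: rpos; rewrite hb h.
  have : lin i (pscale (t - 1) (psub q p)) != 0.
    by apply: lin_e_scale => //; rewrite lt_eqF //; lra.
  have -> : pscale (t - 1) (psub q p) = psub (psub c q) (psub c y).
    by rewrite ey; apply: pt_eq; rewrite /seg_pt /padd /pscale /psub /=; ring.
  by rewrite linN hli subrr eqxx.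
- lra.
Qed.

Lemma BADSEG c u t0 : 0 < t0 < 1 -> u = seg_pt c q t0 ->
  G (psub c p) = G (psub c q) -> G (psub u p) = G (psub u q) ->
  G (psub c p) = G (psub c u) + G (psub u p) -> False.
Proof.
move=> /andP[t00 t01] hu hc hup hcu.
set a := psub u p; set b := psub c p.
have hl : 0 < (1 / 2 : R) < 1 by apply/andP; split; lra.
set mid := padd (pscale (1/2) a) (pscale (1 - 1/2) b).
have h1 := GC (1/2) (1 - 1/2) a b (ltac:(lra)) (ltac:(lra)).
have E : b = padd mid (pscale (1/2) (psub c u)).
  by apply: pt_eq; rewrite /mid /a /b /padd /pscale /psub /=; field.
have h2 := GD mid (pscale (1/2) (psub c u)); rewrite -E GZ in h2; last by lra.
have hE : G mid = 1/2 * G a + (1 - 1/2) * G b.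
  apply/le_anti; rewrite h1 /=; rewrite /b hcu /a in h2 *; lra.
case: (AFF _ _ _ hl hE) => [[ha _]|[i [hi ha hb]]].
  move: (ha); rewrite /a => /G_posdef /psub_eq0 eup.
  move: ha; rewrite /a hup => /G_posdef /psub_eq0 euq.
  by move/negP: Hpq; apply; rewrite -eup euq.
have Eu : psub u q = pscale (1 - t0) (psub c q).
  by rewrite hu; apply: pt_eq; rewrite /seg_pt /padd /pscale /psub /=; ring.
have Ea : a = padd (psub u q) (psub q p).
  by apply: pt_eq; rewrite /a /padd /psub /=; ring.
have Eb : b = padd (psub c q) (psub q p).
  by apply: pt_eq; rewrite /b /padd /psub /=; ring.
have hGa : G a = (1 - t0) * G b by rewrite /a hup Eu GZ /b ?hc //; lra.
move: ha hb; rewrite hGa Ea Eb !linD Eu linZ => ha hb.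
have : t0 * lin i (psub q p) = 0.
  by rewrite -hb in ha; lra.
move/eqP; rewrite mulf_eq0 (negbTE (gp i hi)) orbF => /eqP; lra.
Qed.

Lemma NOCROSS c c' t0 s : 0 < t0 < 1 -> 0 <= s <= 1 ->
  seg_pt c q t0 = seg_pt p c' s ->
  G (psub c p) = G (psub c q) -> G (psub c' p) = G (psub c' q) -> False.
Proof.
move=> ht hs hu hc hc'.
have ht' : 0 <= t0 <= 1 by case/andP: ht => ? ?; apply/andP; split; lra.
have h1 := COL2 c q t0 ht'.
have h2 := COL1 p c' s hs; rewrite -hu in h2.
have h3 := Gtri c (seg_pt c q t0) p.
have h4 := Gtri c' (seg_pt c q t0) q.
apply: (BADSEG c (seg_pt c q t0) t0 ht erefl hc); lra.
Qed.

End PQ.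

Lemma gp_swap (p q : pt R) :
  (forall i, (i < size vs)%N -> lin i (psub q p) != 0) ->
  (forall i, (i < size vs)%N -> lin i (psub p q) != 0).
Proof.
move=> H i hi; have -> : psub p q = pscale (-1) (psub q p).
  by apply: pt_eq; rewrite /pscale /psub /=; ring.
by rewrite linZ mulN1r oppr_eq0 H.
Qed.

Lemma INT (p q c c' : pt R) : p != q ->
  (forall i, (i < size vs)%N -> lin i (psub q p) != 0) ->
  G (psub c p) = G (psub c q) -> G (psub c' p) = G (psub c' q) ->
  0 < orient p q c -> orient p q c <= orient p q c' ->
  0 <= orient q c' c /\ 0 <= orient c' p c.
Proof.
move=> Hpq gp hc hc' s0 s1.
have hpos : 0 < orient p q c' by apply: lt_le_trans s1.
have hne : orient p q c' != 0 by rewrite gt_eqF.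
have Hqp : q != p by rewrite eq_sym.
split; rewrite leNgt; apply/negP => hneg.
- have hr : orient q c' c < 0 <= orient q c' p by rewrite hneg orient_cyc ltW.
  have [t0 [/andP[t00 t01] ht0 _ _]] := ROOT _ _ hr.
  have t01' : t0 < 1.
    rewrite lt_def t01 andbT; apply/negP => /eqP e; move: ht0.
    have hh1 : orient q c' p = orient p q c' by rewrite orient_cyc.
    by rewrite -e; lra.
  have hu0 : orient q c' (seg_pt c p t0) = 0 by rewrite orient_seg.
  have E := edgeYZ p q c' (seg_pt c p t0) hne hu0.
  set s := orient p q (seg_pt c p t0) / orient p q c' in E.
  have hs : 0 <= s <= 1.
    rewrite /s orient_seg.
    have -> : orient p q p = 0 by rewrite /orient /cross /psub /=; ring.
    rewrite mulr0 addr0; apply/andP; split.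
      by apply: divr_ge0; [apply: mulr_ge0|]; lra.
    by rewrite ler_pdivrMr // mul1r; nra.
  apply: (NOCROSS q p Hqp (gp_swap _ _ gp) c c' t0 s) => //.
  by apply/andP; split.
- have hh1 : orient c' p q = orient p q c'.
    by rewrite (orient_cyc q c' p) (orient_cyc p q c').
  have hr : orient c' p c < 0 <= orient c' p q by rewrite hneg hh1 ltW.
  have [t0 [/andP[t00 t01] ht0 _ _]] := ROOT _ _ hr.
  have t01' : t0 < 1.
    rewrite lt_def t01 andbT; apply/negP => /eqP e; move: ht0.
    by rewrite -e; lra.
  have hu0 : orient c' p (seg_pt c q t0) = 0 by rewrite orient_seg.
  have E := edgeZX p q c' (seg_pt c q t0) hne hu0.
  set s := orient p q (seg_pt c q t0) / orient p q c' in E.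
  have hs : 0 <= s <= 1.
    rewrite /s orient_seg.
    have -> : orient p q q = 0 by rewrite /orient /cross /psub /=; ring.
    rewrite mulr0 addr0; apply/andP; split.
      by apply: divr_ge0; [apply: mulr_ge0|]; lra.
    by rewrite ler_pdivrMr // mul1r; nra.
  apply: (NOCROSS p q Hpq gp c c' t0 s) => //.
  by apply/andP; split.
Qed.

Lemma TRI_DECOMP (X Y Z v : pt R) : orient X Y Z != 0 ->
  psub Z v = padd (pscale (orient Y Z v / orient X Y Z) (psub Z X))
                  (pscale (orient Z X v / orient X Y Z) (psub Z Y)).
Proof.
move=> h; apply: pt_eq; move: h; rewrite /orient /cross /padd /pscale /psub /= => h; by field.
Qed.

Lemma on_pq_vals (p q c' : pt R) t :
  [/\ orient q c' (seg_pt p q t) = (1 - t) * orient p q c',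
      orient c' p (seg_pt p q t) = t * orient p q c' &
      orient p q (seg_pt p q t) = 0].
Proof. by split; rewrite /orient /cross /seg_pt /padd /pscale /psub /=; ring. Qed.

Lemma SEGPQ (p q c' : pt R) t : 0 <= t <= 1 -> G (psub c' p) = G (psub c' q) ->
  G (psub c' (seg_pt p q t)) <= G (psub c' p).
Proof.
move=> /andP[t0 t1] hc'.
have -> : psub c' (seg_pt p q t) = padd (pscale (1 - t) (psub c' p)) (pscale t (psub c' q)).
  by apply: pt_eq; rewrite /seg_pt /padd /pscale /psub /=; ring.
apply: le_trans (GC _ _ _ _ _ _) _; rewrite -?hc'; try lra.
Qed.

Lemma MONO (p q c c' z : pt R) : p != q ->
  (forall i, (i < size vs)%N -> lin i (psub q p) != 0) ->
  G (psub c p) = G (psub c q) -> G (psub c' p) = G (psub c' q) ->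
  0 <= orient p q z -> orient p q c <= orient p q c' ->
  G (psub c z) <= G (psub c p) -> G (psub c' z) <= G (psub c' p).
Proof.
move=> Hpq gp hc hc' hz hcc' hcz.
have FIN : forall t s w, 0 <= t <= 1 -> 0 <= s <= 1 -> (w = p \/ w = q) ->
    seg_pt z c t = seg_pt w c' s -> G (psub c' z) <= G (psub c' p).
  move=> t s w ht hs hw E; have := CROSS z c c' w t s ht hs E.
  by case: hw => ->; rewrite ?hc ?hc'; lra.
case: (eqVneq (orient p q z) 0) => hz0.
  have [t [ht ->]] := LINE p q Hpq gp c z hc hz0 hcz.
  exact: SEGPQ.
have hzp : 0 < orient p q z by rewrite lt_def hz0 hz.
have LC : orient p q c <= 0 -> exists t1 tau,
    [/\ 0 < t1 <= 1, 0 <= tau <= 1 & seg_pt z c t1 = seg_pt p q tau].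
  move=> hc0.
  have hr : - orient p q z < 0 <= - orient p q c by rewrite oppr_lt0 hzp oppr_ge0.
  have [t1 [/andP[t10 t11] ht1 _ _]] := ROOT _ _ hr.
  have hy0 : orient p q (seg_pt z c t1) = 0 by rewrite orient_seg; lra.
  have ht1' : 0 <= t1 <= 1 by rewrite t11 ltW.
  have hy := COL1 z c t1 ht1'.
  have hle : G (psub c (seg_pt z c t1)) <= G (psub c p).
    by apply: le_trans hcz; rewrite hy lerDl G_ge0.
  have [tau [htau E]] := LINE p q Hpq gp c _ hc hy0 hle.
  by exists t1, tau; split => //; apply/andP.
have Hqp : q != p by rewrite eq_sym.
case: (ltP 0 (orient p q c')) => hh.
- have hne : orient p q c' != 0 by rewrite gt_eqF.
  have [t0 [ht0 hy0a hy0b hy0s]] : exists t0, [/\ 0 <= t0 <= 1,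
      0 <= orient q c' (seg_pt z c t0), 0 <= orient c' p (seg_pt z c t0) &
      0 <= orient p q (seg_pt z c t0)].
    case: (leP (orient p q c) 0) => hc0.
      have [t1 [tau [/andP[t10 t11] /andP[ta0 ta1] E]]] := LC hc0.
      exists t1; rewrite E; have [-> -> ->] := on_pq_vals p q c' tau.
      split; [by rewrite ltW | nra | nra | by []].
    have [ha hb] := INT p q c c' Hpq gp hc hc' hc0 hcc'.
    by exists 1; rewrite seg1; split => //; [rewrite ler01 lexx | apply: ltW].
  have PLcase : orient q c' z < 0 \/ orient c' p z < 0 ->
      G (psub c' z) <= G (psub c' p).
    move=> Hneg.
    have [t [ht Hc]] := PL _ _ _ _ hy0a hy0b Hneg.
    have Ey := segC1 z c t0 t.
    have hya := orient_seg q c' z (seg_pt z c t0) t.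
    have hyb := orient_seg c' p z (seg_pt z c t0) t.
    have hys := orient_seg p q z (seg_pt z c t0) t.
    have hsum := orient_sum p q c' (seg_pt z (seg_pt z c t0) t).
    have tt0 : 0 <= t * t0 <= 1.
      by case/andP: ht => ? ?; case/andP: ht0 => ? ?; apply/andP; split; nra.
    have hsy : 0 <= orient p q (seg_pt z (seg_pt z c t0) t).
      by rewrite hys; case/andP: ht => ? ?; nra.
    case: Hc => [[eb ea]|[ea eb]].
    + have E := edgeZX p q c' _ hne (etrans hyb eb).
      apply: (FIN (t * t0) (orient p q (seg_pt z (seg_pt z c t0) t) / orient p q c') p tt0 _ (or_introl erefl)); last by rewrite -Ey.
      apply/andP; split; first by apply: divr_ge0 => //; apply: ltW.
      by rewrite ler_pdivrMr // mul1r; lra.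
    + have E := edgeYZ p q c' _ hne (etrans hya ea).
      apply: (FIN (t * t0) (orient p q (seg_pt z (seg_pt z c t0) t) / orient p q c') q tt0 _ (or_intror erefl)); last by rewrite -Ey.
      apply/andP; split; first by apply: divr_ge0 => //; apply: ltW.
      by rewrite ler_pdivrMr // mul1r; lra.
  case: (leP 0 (orient q c' z)) => haz; case: (leP 0 (orient c' p z)) => hbz.
  + (* z in the triangle *)
    rewrite (TRI_DECOMP p q c' z hne).
    apply: le_trans (GC _ _ _ _ _ _) _.
    * by apply: divr_ge0 => //; apply: ltW.
    * by apply: divr_ge0 => //; apply: ltW.
    rewrite -hc'; have hs := orient_sum p q c' z.
    rewrite -mulrDl -mulrDl; apply: ler_piMl; first exact: G_ge0.
    by rewrite ler_pdivrMr // mul1r; lra.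
  + by apply: PLcase; right.
  + by apply: PLcase; left.
  + by apply: PLcase; left.
- have hc0 : orient p q c <= 0 by lra.
  have [t1 [tau [/andP[t10 t11] /andP[ta0 ta1] E1]]] := LC hc0.
  have t1r : 0 <= t1 <= 1 by rewrite t11 ltW.
  case: (eqVneq (orient p q c') 0) => h0.
  + have hle : G (psub c' c') <= G (psub c' p).
      have -> : psub c' c' = porig R by apply: pt_eq; rewrite /psub /porig /=; ring.
      by rewrite G0 G_ge0.
    have [k [/andP[k0 k1] Ek]] := LINE p q Hpq gp c' c' hc' h0 hle.
    case: (leP tau k) => htk.
    * case: (eqVneq k 0) => hk0.
        apply: (FIN t1 0 p t1r _ (or_introl erefl)); first by rewrite lexx ler01.
        rewrite E1 seg0; have -> : tau = 0 by lra.
        by rewrite seg0.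
      apply: (FIN t1 (tau / k) p t1r _ (or_introl erefl)).
        have kp : 0 < k by rewrite lt_def hk0 k0.
        apply/andP; split; first by apply: divr_ge0.
        by rewrite ler_pdivrMr // mul1r.
      rewrite E1 Ek; apply: pt_eq; rewrite /seg_pt /padd /pscale /psub /=; by field.
    * have hk1 : 1 - k != 0 by rewrite gt_eqF //; lra.
      apply: (FIN t1 ((1 - tau) / (1 - k)) q t1r _ (or_intror erefl)).
        apply/andP; split; first by apply: divr_ge0; lra.
        by rewrite ler_pdivrMr ?mul1r; lra.
      rewrite E1 Ek; apply: pt_eq; rewrite /seg_pt /padd /pscale /psub /=; by field.
  + have hneg : orient p q c' < 0 by rewrite lt_def eq_sym h0 hh.
    have hne : orient p q c' != 0 by [].
    have hsumc := orient_sum p q c' c.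
    have PLcase2 : 0 < orient q c' c \/ 0 < orient c' p c ->
        G (psub c' z) <= G (psub c' p).
      move=> Hpos.
      have [va vb _] := on_pq_vals p q c' tau.
      have hab : 0 <= - ((1 - tau) * orient p q c') by rewrite oppr_ge0; nra.
      have hbb : 0 <= - (tau * orient p q c') by rewrite oppr_ge0; nra.
      have Hn : - orient q c' c < 0 \/ - orient c' p c < 0.
        by case: Hpos => h; [left|right]; rewrite oppr_lt0.
      have [t [ht Hc]] := PL _ _ _ _ hab hbb Hn.
      have Ey : seg_pt c (seg_pt p q tau) t = seg_pt z c (1 - t * (1 - t1)).
        by rewrite -E1 segC2.
      have hya := orient_seg q c' c (seg_pt p q tau) t.
      have hyb := orient_seg c' p c (seg_pt p q tau) t.
      have hys := orient_seg p q c (seg_pt p q tau) t.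
      rewrite va in hya; rewrite vb in hyb.
      have [_ _ vs0] := on_pq_vals p q c' tau; rewrite vs0 in hys.
      have hsum := orient_sum p q c' (seg_pt c (seg_pt p q tau) t).
      have tt : 0 <= 1 - t * (1 - t1) <= 1.
        by case/andP: ht => ? ?; apply/andP; split; nra.
      have hsy : orient p q (seg_pt c (seg_pt p q tau) t) <= 0.
        by rewrite hys; case/andP: ht => ? ?; nra.
      case: Hc => [[eb ea]|[ea eb]].
      * have hb0 : orient c' p (seg_pt c (seg_pt p q tau) t) = 0 by lra.
        have E := edgeZX p q c' _ hne hb0.
        apply: (FIN _ (orient p q (seg_pt c (seg_pt p q tau) t) / orient p q c') p tt _ (or_introl erefl)); last by rewrite -Ey.
        apply/andP; split; first by rewrite ler_ndivlMr // mul0r.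
        by rewrite ler_ndivrMr // mul1r; lra.
      * have ha0 : orient q c' (seg_pt c (seg_pt p q tau) t) = 0 by lra.
        have E := edgeYZ p q c' _ hne ha0.
        apply: (FIN _ (orient p q (seg_pt c (seg_pt p q tau) t) / orient p q c') q tt _ (or_intror erefl)); last by rewrite -Ey.
        apply/andP; split; first by rewrite ler_ndivlMr // mul0r.
        by rewrite ler_ndivrMr // mul1r; lra.
    case: (ltP 0 (orient q c' c)) => hac; first by apply: PLcase2; left.
    case: (ltP 0 (orient c' p c)) => hbc; first by apply: PLcase2; right.
    have hb0 : orient c' p c = 0 by lra.
    have E := edgeZX p q c' _ hne hb0.
    have -> : c' = c.
      rewrite E; have -> : orient p q c / orient p q c' = 1.
        by apply/eqP; rewrite -[1](@divff _ (orient p q c')) //; apply/eqP; congr (_ / _); lra.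
      by rewrite seg1.
    exact: hcz.
Qed.

Lemma INJ0 (p q c : pt R) l : p != q ->
  (forall i, (i < size vs)%N -> lin i (psub q p) != 0) -> 0 < l ->
  G (psub c p) = G (psub c q) ->
  G (psub (padd c (pscale l (psub q p))) p) = G (psub (padd c (pscale l (psub q p))) q) ->
  False.
Proof.
move=> Hpq gp l0 hc hc'.
set A0 := psub c q; set A1 := psub c p.
set Al := psub (padd c (pscale l (psub q p))) q.
set Al1 := psub (padd c (pscale l (psub q p))) p.
have lp1 : 0 < l + 1 by lra.
have hl : 0 < l / (l + 1) < 1.
  apply/andP; split; first by apply: divr_gt0.
  by rewrite ltr_pdivrMr // mul1r; lra.
have E1 : A1 = padd (pscale (l / (l + 1)) A0) (pscale (1 - l / (l + 1)) Al1).
  apply: pt_eq; rewrite /A1 /A0 /Al1 /padd /pscale /psub /=; field; lra.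
have E2 : Al = padd (pscale (1 - l / (l + 1)) A0) (pscale (l / (l + 1)) Al1).
  apply: pt_eq; rewrite /Al /A0 /Al1 /padd /pscale /psub /=; field; lra.
have w1 : 0 <= l / (l + 1) by apply: divr_ge0; lra.
have w2 : 0 <= 1 - l / (l + 1) by case/andP: hl => _ h; lra.
have g1 := GC _ _ A0 Al1 w1 w2; rewrite -E1 in g1.
have g2 := GC _ _ A0 Al1 w2 w1; rewrite -E2 in g2.
have hE : G (padd (pscale (l / (l + 1)) A0) (pscale (1 - l / (l + 1)) Al1)) =
          l / (l + 1) * G A0 + (1 - l / (l + 1)) * G Al1.
  rewrite -E1; apply/le_anti; rewrite g1 /=; rewrite /A1 /A0 /Al /Al1 in hc hc' g1 g2 *; lra.
have hGl : G Al1 = G A0.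
  have : (1 - l / (l + 1)) * (G Al1 - G A0) = 0.
    by rewrite -E1 /A1 /A0 hc in hE; lra.
  move/eqP; rewrite mulf_eq0 => /orP[/eqP h|]; first by case/andP: hl => _ h'; lra.
  by rewrite subr_eq0 => /eqP.
case: (AFF _ _ _ hl hE) => [[ha _]|[i [hi ha hb]]].
  move/negP: Hpq; apply; apply/eqP.
  have eq1 := psub_eq0 (G_posdef ha).
  have : G A1 = 0 by rewrite /A1 hc.
  by move/G_posdef/psub_eq0 => <-.
have : lin i (pscale (l + 1) (psub q p)) != 0 by rewrite linZ mulf_neq0 ?gp // gt_eqF.
have -> : pscale (l + 1) (psub q p) = psub Al1 A0.
  by apply: pt_eq; rewrite /Al1 /A0 /padd /pscale /psub /=; ring.
by rewrite linN ha hb hGl subrr eqxx.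
Qed.

Lemma INJ (p q c c' : pt R) : p != q ->
  (forall i, (i < size vs)%N -> lin i (psub q p) != 0) ->
  G (psub c p) = G (psub c q) -> G (psub c' p) = G (psub c' q) ->
  orient p q c = orient p q c' -> c = c'.
Proof.
move=> Hpq gp hc hc' hs.
have hd : c != padd c (psub q p).
  apply/negP => /eqP E; move/negP: Hpq; apply; apply/eqP.
  by apply: pt_eq; move: E => /(congr1 (fun x => (x.1, x.2))) [];
     rewrite /padd /psub /= => h1 h2; lra.
have ho : orient c (padd c (psub q p)) c' = 0.
  by move: hs; rewrite /orient /cross /padd /psub /= => hs; lra.
have [l El] := COLIN _ _ _ hd ho.
have El' : c' = padd c (pscale l (psub q p)).
  by rewrite El; apply: pt_eq; rewrite /seg_pt /padd /pscale /psub /=; ring.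
case: (ltgtP l 0) => hl.
- exfalso; apply: (INJ0 p q c' (- l) Hpq gp) => //; first by rewrite oppr_gt0.
  have -> : padd c' (pscale (- l) (psub q p)) = c.
    by rewrite El'; apply: pt_eq; rewrite /padd /pscale /psub /=; ring.
  exact: hc.
- by exfalso; apply: (INJ0 p q c l Hpq gp) => //; rewrite -El'.
- by rewrite El' hl; apply: pt_eq; rewrite /padd /pscale /psub /=; ring.
Qed.

Lemma gp_of (Y : seq (pt R)) p q : general_position vs Y -> p \in Y -> q \in Y -> p != q ->
  forall i, (i < size vs)%N -> lin i (psub q p) != 0.
Proof.
case=> _ H2 _ pY qY hpq i hi.
have := H2 p q i pY qY hpq hi.
rewrite /lin => h; apply: mulf_neq0; last by rewrite invr_neq0 // gt_eqF // hh_gt0.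
move: h; rewrite /cross oppr_eq0 => h; apply: contra h => /eqP h.
by apply/eqP; lra.
Qed.

End S.

Section T.
Variable R : realType.
Variable vs : seq (pt R).
Hypothesis Hcv : convex_polygon_0 vs.
Local Notation G := (G R vs).
Local Notation lin := (lin R vs).
Local Notation vcellE := (vcellE R vs Hcv).
Local Notation ER := (ER R vs Hcv).
Local Notation hom_G := (hom_G R vs Hcv).
Local Notation MONO := (MONO R vs Hcv).
Local Notation INJ := (INJ R vs Hcv).
Local Notation gp_of := (gp_of R vs Hcv).
Local Notation G_ge0 := (G_ge0 R vs).

Lemma bisec Y p q x : vcell vs Y p x -> vcell vs Y q x -> p \in Y -> q \in Y ->
  G (psub x p) = G (psub x q).
Proof.
move=> /vcellE hp /vcellE hq pY qY; apply/le_anti.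
by rewrite (hp q qY) (hq p pY).
Qed.

Lemma QstarE Y p x : p \in Y -> vcell vs Y p x ->
  Qstar_at vs Y x = [set z | G (psub x z) <= G (psub x p)].
Proof.
move=> pY /vcellE hp; rewrite /Qstar_at (ER Y x p pY hp).
by apply/seteqP; split => z /=; rewrite hom_G ?G_ge0.
Qed.

Lemma BETWEEN Y p q c c1 c2 : general_position vs Y -> p \in Y -> q \in Y -> p != q ->
  vcell vs Y p c -> vcell vs Y q c -> vcell vs Y p c1 -> vcell vs Y q c1 ->
  vcell vs Y p c2 -> vcell vs Y q c2 ->
  orient p q c1 <= orient p q c <= orient p q c2 ->
  Qstar_at vs Y c `<=` Qstar_at vs Y c1 `|` Qstar_at vs Y c2.
Proof.
move=> hgp pY qY hpq hc hcq hc1 hc1q hc2 hc2q /andP[s1 s2].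
have gp := gp_of Y p q hgp pY qY hpq.
have b := bisec Y p q c hc hcq pY qY.
have b1 := bisec Y p q c1 hc1 hc1q pY qY.
have b2 := bisec Y p q c2 hc2 hc2q pY qY.
rewrite (QstarE Y p c pY hc) (QstarE Y p c1 pY hc1) (QstarE Y p c2 pY hc2).
move=> z /= hz.
case: (leP 0 (orient p q z)) => hs.
  by right; apply: (MONO p q c c2 z hpq gp b b2 hs s2 hz).
left; rewrite b1.
have hqp : q != p by rewrite eq_sym.
have hs' : 0 <= orient q p z by rewrite orient_swap oppr_ge0; apply: ltW.
have s1' : orient q p c <= orient q p c1 by rewrite (orient_swap _ p q c) (orient_swap _ p q c1) lerN2.
have hz' : G (psub c z) <= G (psub c q) by rewrite -b.
exact: (MONO q p c c1 z hqp (gp_swap _ _ _ _ gp) (esym b) (esym b1) hs' s1' hz').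
Qed.

Lemma BETW3 (a b c v : R) : (a <= v <= c) \/ (c <= v <= a) ->
  ~ ((a <= v <= b) \/ (b <= v <= a)) -> (b <= v <= c) \/ (c <= v <= b).
Proof.
move=> H N.
have H' : (a <= v /\ v <= c) \/ (c <= v /\ v <= a) by case: H => /andP[]; [left|right].
case: (leP b v) => hb.
  case: (leP v c) => hc; first by left; apply/andP.
  exfalso; apply: N; right; apply/andP; split => //.
  by case: H' => -[h1 h2]; lra.
case: (leP c v) => hc; first by right; apply/andP; split => //; apply: ltW.
exfalso; apply: N; left; apply/andP; split; last exact: ltW.
by case: H' => -[h1 h2]; lra.
Qed.

Lemma DIVT (f : nat -> R) m v : (0 < m)%N ->
  (f 0%N <= v <= f m) \/ (f m <= v <= f 0%N) ->
  exists j, (j < m)%N /\ ((f j <= v <= f j.+1) \/ (f j.+1 <= v <= f j)).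
Proof.
elim: m => [//|m IH] _ H.
case: (posnP m) => [m0|mp].
  by exists 0%N; rewrite m0 in H *; split.
case: (boolP ((f 0%N <= v <= f m) || (f m <= v <= f 0%N))) => hb.
  have [j [hj Hj]] := IH mp (orP hb).
  by exists j; split => //; apply: ltnW.
exists m; split => //; apply: (BETW3 (f 0%N)) => // h.
by move/negP: hb; apply; apply/orP.
Qed.

Lemma SIVT (X Y a b : pt R) v :
  (orient X Y a <= v <= orient X Y b) \/ (orient X Y b <= v <= orient X Y a) ->
  exists t, (0 <= t <= 1) /\ orient X Y (seg_pt a b t) = v.
Proof.
move=> H.
have H' : (orient X Y a <= v /\ v <= orient X Y b) \/ (orient X Y b <= v /\ v <= orient X Y a).
  by case: H => /andP[]; [left|right].
case: (ltgtP (orient X Y a) (orient X Y b)) => hab.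
- exists ((v - orient X Y a) / (orient X Y b - orient X Y a)); split.
    have hd : 0 < orient X Y b - orient X Y a by lra.
    case: H' => -[h1 h2]; last lra.
    apply/andP; split; first by apply: divr_ge0; lra.
    by rewrite ler_pdivrMr // mul1r; lra.
  rewrite orient_seg; field; rewrite subr_eq0 gt_eqF //.
- exists ((orient X Y a - v) / (orient X Y a - orient X Y b)); split.
    have hd : 0 < orient X Y a - orient X Y b by lra.
    case: H' => -[h1 h2]; first lra.
    apply/andP; split; first by apply: divr_ge0; lra.
    by rewrite ler_pdivrMr // mul1r; lra.
  rewrite orient_seg; field; rewrite subr_eq0 gt_eqF //.
- exists 0; split; first by rewrite lexx ler01.
  rewrite seg0; case: H' => -[h1 h2]; lra.
Qed.

Definition betw (a b v : R) := (a <= v <= b) \/ (b <= v <= a).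

Lemma segC3 (a b : pt R) t0 t :
  seg_pt (seg_pt a b t0) b t = seg_pt a b (t0 + t * (1 - t0)).
Proof. by apply: pt_eq; rewrite /seg_pt /padd /pscale /psub /=; ring. Qed.

Lemma HIT (P : nat -> pt R) (X Y : pt R) i0 t0 v : 0 <= t0 <= 1 ->
  betw (orient X Y (P 0%N)) (orient X Y (seg_pt (P i0) (P i0.+1) t0)) v ->
  exists j t, [/\ 0 <= t <= 1, (j < i0)%N \/ (j = i0 /\ t <= t0) &
     orient X Y (seg_pt (P j) (P j.+1) t) = v].
Proof.
move=> ht0 H.
pose Q j := if (j <= i0)%N then P j else seg_pt (P i0) (P i0.+1) t0.
have HQ : (orient X Y (Q 0%N) <= v <= orient X Y (Q i0.+1)) \/
          (orient X Y (Q i0.+1) <= v <= orient X Y (Q 0%N)).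
  by move: H; rewrite /Q /betw /= ?leq0n ?ltnn.
have [j [hj Hj]] := DIVT (fun j => orient X Y (Q j)) i0.+1 v isT HQ.
rewrite ltnS leq_eqVlt in hj; case/orP: hj => [/eqP ej|hj].
  move: Hj; rewrite ej /Q leqnn ltnn => Hj.
  have [t [ht E]] := SIVT X Y (P i0) (seg_pt (P i0) (P i0.+1) t0) v Hj.
  exists i0, (t * t0); split.
  - by case/andP: ht => ? ?; case/andP: ht0 => ? ?; apply/andP; split; nra.
  - by right; split => //; case/andP: ht => ? ?; case/andP: ht0 => ? ?; nra.
  - by rewrite -segC1.
move: Hj; rewrite /Q (ltnW hj) hj => Hj.
have [t [ht E]] := SIVT X Y (P j) (P j.+1) v Hj.
by exists j, t; split => //; left.
Qed.

Lemma HIT2 (P : nat -> pt R) (X Y : pt R) i0 t0 k v : 0 <= t0 <= 1 -> (i0 <= k)%N ->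
  betw (orient X Y (seg_pt (P i0) (P i0.+1) t0)) (orient X Y (P k.+1)) v ->
  exists j t, [/\ 0 <= t <= 1, (j <= k)%N, (i0 < j)%N \/ (j = i0 /\ t0 <= t) &
     orient X Y (seg_pt (P j) (P j.+1) t) = v].
Proof.
move=> ht0 hk H.
pose Q j := if j == 0%N then seg_pt (P i0) (P i0.+1) t0 else P (i0 + j)%N.
have HQ : (orient X Y (Q 0%N) <= v <= orient X Y (Q (k - i0).+1)) \/
          (orient X Y (Q (k - i0).+1) <= v <= orient X Y (Q 0%N)).
  by move: H; rewrite /Q /betw /= addnS subnKC.
have [j [hj Hj]] := DIVT (fun j => orient X Y (Q j)) (k - i0).+1 v isT HQ.
case: (posnP j) => [j0|jp].
  move: Hj; rewrite /Q j0 /= addn1 => Hj.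
  have [t [ht E]] := SIVT X Y _ (P i0.+1) v Hj.
  exists i0, (t0 + t * (1 - t0)); split => //.
  - by case/andP: ht => ? ?; case/andP: ht0 => ? ?; apply/andP; split; nra.
  - by right; split => //; case/andP: ht => ? ?; case/andP: ht0 => ? ?; nra.
  - by rewrite -segC3.
move: Hj; rewrite /Q (gtn_eqF jp) /= addnS => Hj.
have [t [ht E]] := SIVT X Y _ _ v Hj.
exists (i0 + j)%N, t; split => //.
- by rewrite ltnS in hj; rewrite -(subnKC hk) leq_add2l.
- by left; rewrite -{1}(addn0 i0) ltn_add2l.
Qed.

Lemma PART2 Y w1 w2 x : general_position vs Y -> on_edge_between vs Y w1 w2 x ->
  Qstar_at vs Y x `<=` Qstar_at vs Y w1 `|` Qstar_at vs Y w2.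
Proof.
move=> hgp [p [q [us]]] [pY qY hpq [_ Hpath [i0 [hi0 [t0 [ht0 Ex]]]]]].
set P := fun j => nth w1 (w1 :: rcons us w2) j.
set k := size us in hi0 Hpath.
have HP0 : P 0%N = w1 by [].
have HPk : P k.+1 = w2 by rewrite /P /= nth_rcons ltnn eqxx.
have gp := gp_of Y p q hgp pY qY hpq.
have r01 : 0 <= (0:R) <= 1 by rewrite lexx ler01.
have r11' : 0 <= (1:R) <= 1 by rewrite ler01 lexx.
have [hw1p hw1q _ _ _] := Hpath 0%N 0 (leq0n _) r01.
rewrite seg0 in hw1p hw1q.
have [hw2p hw2q _ _ _] := Hpath k 1 (leqnn _) r11'.
rewrite seg1 in hw2p hw2q.
have e2 : nth w1 (w1 :: rcons us w2) k.+1 = w2 := HPk.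
rewrite e2 in hw2p hw2q.
have [hxp hxq _ _ _] := Hpath i0 t0 hi0 ht0.
rewrite -Ex in hxp hxq.
have bis := fun z (hp : vcell vs Y p z) (hq : vcell vs Y q z) => bisec Y p q z hp hq pY qY.
have NW2 : betw (orient p q w1) (orient p q x) (orient p q w2) ->
    orient p q x = orient p q w2.
  move=> H; rewrite Ex in H.
  have [j [t [ht hj E]]] := HIT P p q i0 t0 (orient p q w2) ht0 H.
  have hjk : (j <= k)%N by case: hj => [h|[-> _]] //; apply: leq_trans (ltnW h) hi0.
  have [hzp hzq _ Hz2 _] := Hpath j t hjk ht.
  have ez := INJ p q _ _ hpq gp (bis _ hzp hzq) (bis _ hw2p hw2q) E.
  have [ejk et1] := Hz2 ez.
  case: hj => [hlt|[eji htt]].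
    by exfalso; move: hlt; rewrite ejk ltnNge hi0.
  have et0 : t0 = 1 by case/andP: ht0 => _ h; lra.
  by rewrite Ex et0 -eji ejk seg1 e2.
have NW1 : betw (orient p q x) (orient p q w2) (orient p q w1) ->
    orient p q x = orient p q w1.
  move=> H.
  have H' : betw (orient p q (seg_pt (P i0) (P i0.+1) t0)) (orient p q (P k.+1))
     (orient p q w1) by rewrite HPk -Ex.
  have [j [t [ht hjk hj E]]] := HIT2 P p q i0 t0 k (orient p q w1) ht0 hi0 H'.
  have [hzp hzq Hz1 _ _] := Hpath j t hjk ht.
  have ez := INJ p q _ _ hpq gp (bis _ hzp hzq) (bis _ hw1p hw1q) E.
  have [ej0 et0] := Hz1 ez.
  case: hj => [hlt|[eji htt]].
    by exfalso; move: hlt; rewrite ej0.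
  have et : t0 = 0 by case/andP: ht0 => h _; lra.
  by rewrite Ex et -eji ej0 seg0.
case: (leP (orient p q w1) (orient p q w2)) => h12.
- apply: (BETWEEN Y p q x w1 w2) => //.
  apply/andP; split.
    rewrite leNgt; apply/negP => hlt.
    have : orient p q x = orient p q w1.
      by apply: NW1; left; apply/andP; split; [apply: ltW|].
    lra.
  rewrite leNgt; apply/negP => hlt.
  have : orient p q x = orient p q w2.
    by apply: NW2; left; apply/andP; split; [|apply: ltW].
  lra.
- rewrite setUC; apply: (BETWEEN Y p q x w2 w1) => //.
  apply/andP; split.
    rewrite leNgt; apply/negP => hlt.
    have : orient p q x = orient p q w2.
      by apply: NW2; right; apply/andP; split; [apply: ltW|apply: ltW].
    lra.
  rewrite leNgt; apply/negP => hlt.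
  have : orient p q x = orient p q w1.
    by apply: NW1; right; apply/andP; split; apply: ltW.
  lra.
Qed.

Lemma PART1 Y w1 w2 x : general_position vs Y -> consecutive_on_edge vs Y w1 w2 ->
  on_seg w1 w2 x -> Qstar_at vs Y x `<=` Qstar_at vs Y w1 `|` Qstar_at vs Y w2.
Proof.
move=> hgp [_ _ _ [p [q [pY qY hpq Hseg _]]]] [t [ht Ex]].
have [h1p h1q] : vcell vs Y p w1 /\ vcell vs Y q w1.
  by apply: Hseg; exists 0; rewrite seg0 lexx ler01.
have [h2p h2q] : vcell vs Y p w2 /\ vcell vs Y q w2.
  by apply: Hseg; exists 1; rewrite seg1 lexx ler01.
have [hxp hxq] : vcell vs Y p x /\ vcell vs Y q x by apply: Hseg; exists t.
have so := orient_seg _ p q w1 w2 t; rewrite -Ex in so.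
case/andP: ht => t0 t1.
case: (leP (orient p q w1) (orient p q w2)) => h12.
- apply: (BETWEEN Y p q x w1 w2) => //.
  by rewrite so; apply/andP; split; nra.
- rewrite setUC; apply: (BETWEEN Y p q x w2 w1) => //.
  by rewrite so; apply/andP; split; nra.
Qed.
End T.

Theorem lemma3 (R : realType) (vs : seq (pt R)) (Y : seq (pt R)) :
  convex_polygon_0 vs -> general_position vs Y ->
  (forall w1 w2 x : pt R, consecutive_on_edge vs Y w1 w2 -> on_seg w1 w2 x ->
     Qstar_at vs Y x `<=` Qstar_at vs Y w1 `|` Qstar_at vs Y w2) /\
  (forall w1 w2 x : pt R, vor_vertex vs Y w1 -> vor_vertex vs Y w2 ->
     on_edge_between vs Y w1 w2 x ->
     Qstar_at vs Y x `<=` Qstar_at vs Y w1 `|` Qstar_at vs Y w2).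
Proof.
move=> Hcv hgp; split.
  by move=> w1 w2 x; apply: PART1.
by move=> w1 w2 x _ _; apply: PART2.
Qed.
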